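(* Let $J$ be a simple current of $\mathcal{A}$, $\psi,\chi,\chi'\in\{0,1\}$ and $i,i'\in I$. Then the fusion coefficient of $\mathcal{A}_{\rm perm}$ satisfies $$N_{(J,\psi)(i,\chi)}^{\phantom{(J,\psi)(i,\chi)}(i',\chi')}=\tfrac12\,N_{Ji}^{\ \ i'}\Big(N_{Ji}^{\ \ i'}+e^{i\pi(\psi+\chi-\chi')}\Big),$$ where $N_{Ji}^{\ \ i'}$ are the fusion coefficients of $\mathcal{A}$. Consequently a diagonal field $(i,\chi)$ is a fixed point of $(J,\psi)$ (i.e. $N_{(J,\psi)(i,\chi)}^{\phantom{(J,\psi)(i,\chi)}(i,\chi)}=1$) if and only if $\psi=0$ and $Ji=i$.
   Context: Let $\mathcal{A}$ be a unitary rational conformal field theory with finite set of primary fields $I$, identity $0\in I$, central charge $c$, conformal weights $h_i$, and modular matrices $S$ (symmetric, unitary, with $S_{0i}\ge S_{00}>0$) and $T=\mathrm{diag}(e^{2\pi i(h_i-c/24)})$; put $P=T^{1/2}ST^{2}ST^{1/2}$. Fusion coefficients of $\mathcal{A}$ are $N_{ij}^{\ \ k}=\sum_{m\in I}S_{im}S_{jm}\overline{S_{km}}/S_{0m}$ (non-negative integers). A simple current $J$ of $\mathcal{A}$ is a field with $S_{J0}=S_{00}$; for each $i$ there is then a unique field $Ji$ with $N_{Ji}^{\ \ k}=\delta_{k,Ji}$. The $\mathbb{Z}_2$ permutation orbifold $\mathcal{A}_{\rm perm}$ has primaries: diagonal $(i,\psi)$ ($i\in I$, $\psi\in\{0,1\}$),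 off-diagonal $\langle i,j\rangle$ (unordered pairs $i\neq j$), twisted $\widehat{(i,\psi)}$; identity $(0,0)$; modular matrix $S^{BHS}$ given by $S^{BHS}_{\langle i,j\rangle\langle p,q\rangle}=S_{ip}S_{jq}+S_{iq}S_{jp}$, $S^{BHS}_{\langle i,j\rangle(p,\psi)}=S_{ip}S_{jp}$, $S^{BHS}_{\langle i,j\rangle\widehat{(p,\psi)}}=0$, $S^{BHS}_{(i,\psi)(j,\chi)}=\tfrac12 S_{ij}^2$, $S^{BHS}_{(i,\psi)\widehat{(p,\chi)}}=\tfrac12 e^{i\pi\psi}S_{ip}$, $S^{BHS}_{\widehat{(p,\psi)}\widehat{(q,\chi)}}=\tfrac12 e^{i\pi(\psi+\chi)}P_{pq}$ (and symmetric). Fusion coefficients of $\mathcal{A}_{\rm perm}$ are defined by the Verlinde formula $N_{AB}^{\ \ C}=\sum_{N}S^{BHS}_{AN}S^{BHS}_{BN}\overline{S^{BHS}_{CN}}/S^{BHS}_{(0,0)N}$, the sum running over all primaries $N$ of $\mathcal{A}_{\rm perm}$. *)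

(* Defs.v *)
From HB Require Import structures.
From mathcomp Require Import all_boot all_order all_algebra all_field.
Set Implicit Arguments. Unset Strict Implicit. Unset Printing Implicit Defensive.
Import Order.TTheory GRing.Theory Num.Theory.
Local Open Scope ring_scope.

(* e^{i pi q} for a rational q: with q = a/b (b > 0, reduced),
   b.-root (-1) is the root of -1 of minimal argument, i.e. e^{i pi / b}. *)
Definition expipi (q : rat) : algC := ((absz (denq q)).-root (-1)) ^ (numq q).

Section Perm.
Variables (I : finType) (i0 : I) (S : I -> I -> algC) (h : I -> rat) (c : rat).

Definition Thalf (p : I) : algC := expipi (h p - c / 24%:R).
Definition Tdiag (p : I) : algC := expipi (2%:R * (h p - c / 24%:R)).

Definition Pmat (p q : I) : algC :=
  Thalf p * (\sum_m S p m * (Tdiag m) ^+ 2 * S m q) * Thalf q.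

Definition NA (i j k : I) : algC :=
  \sum_m S i m * S j m * (S k m)^* / S i0 m.

(* Primaries of A_perm: diagonal (i,psi), off-diagonal <i,j> (unordered pairs
   i <> j, represented by the ordered pair with enum_rank i < enum_rank j),
   twisted hat(i,psi). *)
Definition offpair := {x : I * I | (enum_rank x.1 < enum_rank x.2)%N}.
Definition pfield := ((I * 'I_2) + offpair + (I * 'I_2))%type.

Definition diagF (i : I) (psi : 'I_2) : pfield := inl (inl (i, psi)).
Definition offF (x : offpair) : pfield := inl (inr x).
Definition twF (i : I) (psi : 'I_2) : pfield := inr (i, psi).

Definition eph (psi : 'I_2) : algC := expipi (psi%:R).

Definition SBHS (A B : pfield) : algC :=
  match A, B with
  | inl (inl (i, psi)), inl (inl (j, chi)) => (S i j) ^+ 2 / 2%:R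
  | inl (inl (p, _)), inl (inr x) => S (val x).1 p * S (val x).2 p
  | inl (inr x), inl (inl (p, _)) => S (val x).1 p * S (val x).2 p
  | inl (inl (i, psi)), inr (p, _) => eph psi * S i p / 2%:R
  | inr (p, _), inl (inl (i, psi)) => eph psi * S i p / 2%:R
  | inl (inr x), inl (inr y) =>
      S (val x).1 (val y).1 * S (val x).2 (val y).2
      + S (val x).1 (val y).2 * S (val x).2 (val y).1
  | inl (inr _), inr _ => 0
  | inr _, inl (inr _) => 0
  | inr (p, psi), inr (q, chi) => eph psi * eph chi * Pmat p q / 2%:R
  end.

Definition Nperm (A B C : pfield) : algC :=
  \sum_N SBHS A N * SBHS B N * (SBHS C N)^* / SBHS (diagF i0 0) N.

End Perm.

Definition modular_data (I : finType) (i0 : I) (S : I -> I -> algC) : Prop :=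
  [/\ (forall i j, S i j = S j i),
      (forall i j, \sum_m S i m * (S j m)^* = (i == j)%:R),
      (0 < S i0 i0), (forall i, S i0 i0 <= S i0 i)
    & (forall i j k, NA i0 S i j k \in Num.nat)].

(* Main.v *)
Require Import Defs.
From HB Require Import structures.
From mathcomp Require Import all_boot all_order all_algebra all_field.
From mathcomp Require Import ring.
Import Order.TTheory GRing.Theory Num.Theory.
Local Open Scope ring_scope.

Lemma expipi_int (z : int) : expipi z%:~R = (-1) ^ z.
Proof. by rewrite /expipi numq_int denq_int root1C. Qed.

Lemma expipi_nat3 (a b c : nat) :
  expipi (a%:R + b%:R - c%:R) = (-1) ^+ a * (-1) ^+ b * ((-1) ^+ c)^-1.
Proof.
have -> : (a%:R + b%:R - c%:R : rat) = ((a + b)%:Z - c%:Z)%:~R.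
  by rewrite rmorphB /= -!pmulrn natrD.
rewrite (expipi_int ((a+b)%:Z - c%:Z)) expfzDr ?oppr_eq0 ?oner_eq0 // -invr_expz.
by rewrite -exprD.
Qed.

Lemma eph_sign (k : 'I_2) : eph k = (-1) ^+ k.
Proof. exact: (expipi_int k). Qed.

Section H.
Variable I : finType.

Lemma off_sum (F : I * I -> algC) :
  \sum_(x : offpair I) F (val x) = \sum_(x : I * I | (enum_rank x.1 < enum_rank x.2)%N) F x.
Proof.
rewrite (reindex_omap (val : offpair I -> I * I) insub); last first.
  by move=> i Pi; rewrite insubT.
by apply: eq_bigl=> -[i iA]/=; rewrite insubT ?iA /= eqxx.
Qed.

Lemma sq_sum (a : I -> algC) : (\sum_p a p) ^+ 2 =
  \sum_p a p ^+ 2 + 2%:R * \sum_(x : I * I | (enum_rank x.1 < enum_rank x.2)%N) a x.1 * a x.2.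
Proof.
rewrite expr2 big_distrlr /=.
have E p q : a p * a q = (if (enum_rank p < enum_rank q)%N then a p * a q else 0)
   + (if q == p then a q ^+ 2 else 0)
   + (if (enum_rank q < enum_rank p)%N then a q * a p else 0).
  have [<-|ne] := eqVneq q p; first by rewrite ltnn addr0 add0r expr2.
  have : enum_rank p != enum_rank q.
    by apply: contra ne => /eqP /enum_rank_inj ->.
  by rewrite neq_ltn => /orP[] H; rewrite H ?(ltnNge _ _) ?(ltnW H) /= ?addr0 ?add0r // mulrC.
under eq_bigr do under eq_bigr do rewrite E.
under eq_bigr do rewrite !big_split /=.
rewrite !big_split /= [X in _ + _ + X]exchange_big /=.
under [X in _ + X + _]eq_bigr do rewrite -big_mkcond big_pred1_eq.
under [X in _ + _ + X]eq_bigr do rewrite -big_mkcond.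
under [X in X + _ + _]eq_bigr do rewrite -big_mkcond.
rewrite !pair_big_dep /= mulr2n mulrDl mul1r; ring.
Qed.

Variables (i0 : I) (S : I -> I -> algC) (h : I -> rat) (c : rat).
Hypothesis hsym : forall i j, S i j = S j i.
Hypothesis hS0 : forall p, S i0 p != 0.

Lemma Nperm_diag (J i i' : I) (psi chi chi' : 'I_2) :
  Nperm i0 S h c (diagF J psi) (diagF i chi) (diagF i' chi')
  = 2%:R^-1 * NA i0 S J i i' * (NA i0 S J i i' + eph psi * eph chi * (eph chi')^*).
Proof.
have h2 : (2%:R : algC) != 0 by rewrite pnatr_eq0.
rewrite /Nperm !big_sumType /=.
set a := fun p => S J p * S i p * (S i' p)^* / S i0 p.
have NAe : NA i0 S J i i' = \sum_p a p by [].
rewrite (eq_bigr (fun x : I * 'I_2 => a x.1 ^+ 2 / 4%:R)); last first.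
  move=> [p f] _ /=; rewrite /a !(rmorphM, rmorphXn, fmorphV, conjC_nat) /=.
  by field; rewrite ?hS0 ?pnatr_eq0.
rewrite (eq_bigr (fun x : offpair I => a (val x).1 * a (val x).2)); last first.
  move=> x _ /=; rewrite /a !(hsym (val x).1) !(hsym (val x).2) !(rmorphM) /=.
  by field; rewrite ?hS0.
rewrite [X in _ + _ + X](eq_bigr (fun x : I * 'I_2 => eph psi * eph chi * (eph chi')^* * a x.1 / 4%:R)); last first.
  move=> [p f] _ /=; rewrite (eph_sign 0) expr0 /a !(rmorphM, rmorphXn, fmorphV, conjC_nat) /=.
  by field; rewrite ?hS0 ?pnatr_eq0.
rewrite (off_sum (fun x => a x.1 * a x.2)).
rewrite -(pair_bigA _ (fun p (f : 'I_2) => a p ^+ 2 / 4%:R)).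
rewrite -(pair_bigA _ (fun p (f : 'I_2) => eph psi * eph chi * (eph chi')^* * a p / 4%:R)).
under [X in X + _ + _]eq_bigr do rewrite sumr_const card_ord -[_ *+ 2]mulr_natr.
under [X in _ + _ + X]eq_bigr do rewrite sumr_const card_ord -[_ *+ 2]mulr_natr.
rewrite -!mulr_suml -mulr_sumr NAe.
move: (sq_sum a).
move: (\sum_(x | _) _) (\sum_p a p) (\sum_p a p ^+ 2) (eph psi * eph chi * (eph chi')^*) => T A B e sq.
have -> : T = (A ^+ 2 - B) / 2%:R by rewrite sq; field; rewrite ?pnatr_eq0.
by field; rewrite ?pnatr_eq0.
Qed.
End H.

Theorem mainTheorem2 (I : finType) (i0 : I) (S : I -> I -> algC)
    (h : I -> rat) (c : rat)
    (hS : modular_data i0 S)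
    (J : I) (hJ0 : S J i0 = S i0 i0)
    (Jact : I -> I) (hJact : forall i k, NA i0 S J i k = (k == Jact i)%:R) :
  (forall (psi chi chi' : 'I_2) (i i' : I),
     Nperm i0 S h c (diagF J psi) (diagF i chi) (diagF i' chi')
     = 2%:R^-1 * NA i0 S J i i'
         * (NA i0 S J i i' + expipi (psi%:R + chi%:R - chi'%:R)))
  /\
  (forall (psi chi : 'I_2) (i : I),
     Nperm i0 S h c (diagF J psi) (diagF i chi) (diagF i chi) = 1
     <-> (psi = 0 /\ Jact i = i)).
Proof.
case: hS => hsym _ h00 hle _.
have hS0 p : S i0 p != 0 by apply: lt0r_neq0; exact: lt_le_trans h00 (hle p).
have E (psi chi chi' : 'I_2) :
    eph psi * eph chi * (eph chi')^* = expipi (psi%:R + chi%:R - chi'%:R).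
  by rewrite expipi_nat3 !eph_sign rmorph_sign -exprVn invrN1.
have P1 : forall (psi chi chi' : 'I_2) (i i' : I),
     Nperm i0 S h c (diagF J psi) (diagF i chi) (diagF i' chi')
     = 2%:R^-1 * NA i0 S J i i'
         * (NA i0 S J i i' + expipi (psi%:R + chi%:R - chi'%:R)).
  by move=> psi chi chi' i i'; rewrite Nperm_diag // E.
split=> // psi chi i.
rewrite P1 expipi_nat3 mulfK ?signr_eq0 // hJact.
have h2 : (2%:R : algC) != 0 by rewrite pnatr_eq0.
case: (eqVneq i (Jact i)) => [e|ne].
  rewrite -e; case: psi => [[|[|//]] p] /=.
    split=> _; last by field.
    by split=> //; apply: val_inj.
  split=> [|[]]; last by move/(congr1 val).
  rewrite expr1 subrr mulr0 => /eqP; by rewrite eq_sym oner_eq0.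
rewrite mulr0 mul0r; split=> [/eqP|[_ e]]; first by rewrite eq_sym oner_eq0.
by move: ne; rewrite e eqxx.
Qed.
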